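(* Let $0<\varepsilon<1$ and let $E^1=\{uv: \varepsilon w_v<w_u<w_v/\varepsilon\}$ (unordered pairs, $u=v$ allowed) and $N^1_u=\{v\in V: uv\in E^1\}$. Let $\mathcal C'$ be any clustering of $V$ that does not split any atom and such that for every $u\in V$ and every $C\in\mathcal C'$ with $K_u\subsetneq C$ we have $w(u,C)>\frac{|C|}2+\varepsilon w_u$. Then for every $C\in\mathcal C'$ and any $u,v\in C$ with $v\notin K_u$, $$\sum_{p\in N^1_u\cap N^1_v}w_{up}w_{vp}>\varepsilon(w_u+w_v).$$
   Context: A Correlation Clustering instance consists of a finite vertex set $V$ and a partition $E^+\uplus E^-=\binom V2$ of unordered pairs of distinct vertices into $+$edges and $-$edges. $\mathcal K$ is a partition of $V$ into atoms, and every pair of distinct vertices in a common atom is a $+$edge. For $u\in V$, $K_u$ is the atom containing $u$ and $k_u=|K_u|$. For $u,v\in V$ (possibly equal), $w_{uv}=\frac1{k_uk_v}\sum_{u'\in K_u,v'\in K_v}\mathbf 1[u'v'\text{ is a }+\text{edge or }u'=v']\in[0,1]$; for $V'\subseteq V$, $w(u,V')=\sum_{v\in V'}w_{uv}$, and $w_u=w(u,V)$. *)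

(* Defs.v *)
From HB Require Import structures.
From mathcomp Require Import all_boot all_order all_algebra.
Set Implicit Arguments. Unset Strict Implicit. Unset Printing Implicit Defensive.
Import Order.TTheory GRing.Theory Num.Theory.
Local Open Scope ring_scope.

(* Correlation clustering instance: vertex set = finite type V,
   plus : rel V gives the +edges (meaningful on distinct pairs; symmetric),
   K : {set {set V}} is the partition into atoms. *)
Section CC.
Variables (R : realFieldType) (V : finType) (plus : rel V) (K : {set {set V}}).

Definition atom (u : V) : {set V} := pblock K u.
Definition katom (u : V) : nat := #|atom u|.

Definition wgt (u v : V) : R :=
  (katom u * katom v)%:R^-1 *
  \sum_(u' in atom u) \sum_(v' in atom v)
     (if plus u' v' || (u' == v') then 1 else 0).

Definition wset (u : V) (V' : {set V}) : R := \sum_(v in V') wgt u v.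

Definition wdeg (u : V) : R := wset u [set: V].

Definition N1 (eps : R) (u : V) : {set V} :=
  [set v | (eps * wdeg v < wdeg u) && (wdeg u < wdeg v / eps)].
End CC.

Definition cc_instance (V : finType) (plus : rel V) (K : {set {set V}}) :=
  [/\ symmetric plus,
      partition K [set: V] &
      forall A, A \in K -> forall x y, x \in A -> y \in A -> x != y -> plus x y].

(* Main.v *)
Require Import Defs.
From HB Require Import structures.
From mathcomp Require Import all_boot all_order all_algebra.
From mathcomp Require Import lra.
Import Order.TTheory GRing.Theory Num.Theory.
Local Open Scope ring_scope.

Lemma sum_sub_le (R : realFieldType) (T : finType) (C A : {set T}) (F : T -> R) :
  C \subset A -> (forall x, 0 <= F x) ->
  \sum_(x in C) F x <= \sum_(x in A) F x.
Proof.
move=> sCA F0; rewrite [X in _ <= X](big_setID C) /= (setIidPr sCA).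
by rewrite lerDl; apply: sumr_ge0.
Qed.

Section L.
Variables (R : realFieldType) (V : finType) (plus : rel V) (K : {set {set V}}).

Lemma wgt_ge0 u v : 0 <= wgt R plus K u v.
Proof.
rewrite /wgt mulr_ge0 ?invr_ge0 ?ler0n //.
by apply: sumr_ge0 => i _; apply: sumr_ge0 => j _; case: ifP.
Qed.

Lemma wgt_le1 u v : wgt R plus K u v <= 1.
Proof.
rewrite /wgt.
set S := \sum_(u' in _) _.
have SS : S <= (katom K u * katom K v)%:R.
  rewrite /S natrM /katom.
  have -> : #|atom K u|%:R * #|atom K v|%:R =
      \sum_(u' in atom K u) \sum_(v' in atom K v) (1 : R).
    by rewrite sumr_const sumr_const -mulr_natl mulr1 -[in RHS]mulr_natr mulrC.
  apply: ler_sum => i _; apply: ler_sum => j _; by case: ifP.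
case: (posnP (katom K u * katom K v)) => [->|kp].
  by rewrite invr0 mul0r.
by rewrite mulrC ler_pdivrMr ?ltr0n // mul1r.
Qed.

Lemma wset_le_card u C : wset R plus K u C <= #|C|%:R.
Proof.
rewrite /wset -sumr_const. apply: ler_sum => i _; exact: wgt_le1.
Qed.

Lemma wset_le_wdeg u C : wset R plus K u C <= wdeg R plus K u.
Proof.
rewrite /wdeg /wset; apply: sum_sub_le; [exact: subsetT | exact: wgt_ge0].
Qed.

Lemma wdeg_ge0 u : 0 <= wdeg R plus K u.
Proof. by apply: sumr_ge0 => i _; exact: wgt_ge0. Qed.
End L.

Theorem lemma11 (R : realFieldType) (V : finType) (plus : rel V)
  (K : {set {set V}}) (eps : R) (C' : {set {set V}}) :
  cc_instance plus K ->
  0 < eps -> eps < 1 ->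
  partition C' [set: V] ->
  (* C' does not split any atom *)
  (forall A, A \in K -> exists2 C, C \in C' & A \subset C) ->
  (forall u C, C \in C' -> atom K u \proper C ->
     wset R plus K u C > #|C|%:R / 2 + eps * wdeg R plus K u) ->
  forall C, C \in C' -> forall u v, u \in C -> v \in C -> v \notin atom K u ->
    \sum_(p in N1 plus K eps u :&: N1 plus K eps v)
        wgt R plus K u p * wgt R plus K v p
      > eps * (wdeg R plus K u + wdeg R plus K v).
Proof.
case=> _ /and3P[/eqP covK tK _] _ e0 e1 /and3P[/eqP covC tC _] Hsplit Hw C CC u v uC vC vNu.
have inK : forall x, x \in cover K by move=> x; rewrite covK inE.
have sub : forall x, x \in C -> atom K x \subset C.
  move=> x xC; have [C2 C2C sC2] := Hsplit _ (pblock_mem (inK x)).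
  have xC2 : x \in C2 by apply: (subsetP sC2); rewrite mem_pblock.
  by rewrite -(def_pblock tC CC xC) (def_pblock tC C2C xC2).
have prop : forall x, x \in C -> atom K x \proper C.
  move=> x xC; rewrite properEneq sub // andbT; apply/eqP => Ex.
  have ux : u \in atom K x by rewrite Ex.
  have vx : v \in atom K x by rewrite Ex.
  move: vNu; rewrite /atom (same_pblock tK ux) -/(atom K x) vx //.
have cge : forall x, x \in C -> #|C|%:R / 2 + eps * wdeg R plus K x < #|C|%:R.
  move=> x xC; apply: lt_le_trans (Hw _ _ CC (prop _ xC)) _; exact: wset_le_card.
have inN : forall x p, x \in C -> p \in C -> p \in N1 plus K eps x.
  move=> x p xC pC; rewrite inE; apply/andP; split.
    have := Hw _ _ CC (prop _ pC); have := Hw _ _ CC (prop _ xC).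
    have := wset_le_card R V plus K p C; have := wset_le_wdeg R V plus K x C.
    have := cge _ pC; have := mulr_ge0 (ltW e0) (wdeg_ge0 R V plus K x). lra.
  rewrite ltr_pdivlMr //.
  have := Hw _ _ CC (prop _ pC); have := Hw _ _ CC (prop _ xC).
  have := wset_le_card R V plus K x C; have := wset_le_wdeg R V plus K p C.
  have := cge _ xC; have := mulr_ge0 (ltW e0) (wdeg_ge0 R V plus K p). lra.
have sCN : C \subset N1 plus K eps u :&: N1 plus K eps v.
  by apply/subsetP => p pC; rewrite inE !inN.
have sle := @sum_sub_le R V _ _ (fun p => wgt R plus K u p * wgt R plus K v p) sCN
  (fun x => mulr_ge0 (wgt_ge0 R V plus K u x) (wgt_ge0 R V plus K v x)).
apply: lt_le_trans sle.
apply: (@lt_le_trans _ _ (\sum_(p in C) (wgt R plus K u p + wgt R plus K v p - 1))).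
  rewrite sumrB big_split /= sumr_const -/(wset R plus K u C) -/(wset R plus K v C).
  have := Hw _ _ CC (prop _ uC); have := Hw _ _ CC (prop _ vC). lra.
apply: ler_sum => p _.
have := wgt_le1 R V plus K u p; have := wgt_le1 R V plus K v p.
have := wgt_ge0 R V plus K u p; have := wgt_ge0 R V plus K v p. nra.
Qed.
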